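(* Let $A$ be a subalgebra of a $K$-algebra $E$, $\Delta\subseteq\mathrm{Der}_A(E)$, $I$ an ideal of $E$, and $S$ a left denominator set of $E$ with $\mathrm{ass}_E(S)=I$ and $S\subseteq N_\Delta(E)_0$. Let $\overline{E}=E/I$, $I'=A\cap I$, $\overline{A}=A/I'$, $\overline{S}=\{s+I\mid s\in S\}$. Then: (1) $I$ is $\Delta$-stable, i.e. $\delta(I)\subseteq I$ for all $\delta\in\Delta$; hence each $\delta$ induces $\overline{\delta}\in\mathrm{Der}_{\overline{A}}(\overline{E})$, $\overline{\delta}(e+I)=\delta(e)+I$; set $\overline{\Delta}=\{\overline{\delta}\mid\delta\in\Delta\}$. (2) If $\Delta$ is finite, then $S$ is a left denominator set of $N_\Delta(E)$ with $\mathrm{ass}_{N_\Delta(E)}(S)=N_\Delta(E)\cap I$. (3) If $\Delta$ is finite, then $N_\Delta(S^{-1}E)\cong S^{-1}N_\Delta(E)$. (4) If $\Delta$ is finite, then $N_\Delta(S^{-1}E)_i\cong S^{-1}N_\Delta(E)_i$ for all $i\ge0$. (5) $\overline{S}^{-1}\overline{E}\cong S^{-1}E$, $\overline{S}^{-1}N_{\overline{\Delta}}(\overline{E})\cong N_{\overline{\Delta}}(\overline{S}^{-1}\overline{E})\cong N_\Delta(S^{-1}E)$, and $\overline{S}^{-1}N_{\overline{\Delta}}(\overline{E})_i\cong N_{\overline{\Delta}}(\overline{S}^{-1}\overline{E})_i\cong N_\Delta(S^{-1}E)_i$ for all $i\geq0$.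
   Context: $\mathrm{Der}_A(E)$ is the set of derivations of $E$ that are $A$-module homomorphisms (derivations of $S^{-1}E$ are extended by $\delta(s^{-1}e)=s^{-1}\delta(e)$). For $i\ge1$, $\Delta^i=\{\delta_1\cdots\delta_i\mid\delta_j\in\Delta\}$; for an algebra $B$ with $\Delta$ acting by derivations, $N_\Delta(B)_i=\{b\in B\mid\Delta^{i+1}b=0\}$ ($i\ge0$) and $N_\Delta(B)=\bigcup_iN_\Delta(B)_i$. A left denominator set $S$ of a ring $B$ is a multiplicative left Ore set such that $bs=0$ ($b\in B,s\in S$) implies $tb=0$ for some $t\in S$; $\mathrm{ass}_B(S)=\{b\in B\mid sb=0\text{ for some }s\in S\}$; $S^{-1}B$ is the left localization. *)

(* Defs.v *)
From HB Require Import structures.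
From mathcomp Require Import all_boot all_order all_algebra.
Set Implicit Arguments. Unset Strict Implicit. Unset Printing Implicit Defensive.
Import GRing.Theory.
Local Open Scope ring_scope.

Section Defs.
Variable B : pzRingType.

Definition is_ideal (I : B -> Prop) : Prop :=
  [/\ I 0, (forall x y, I x -> I y -> I (x + y)) &
      (forall a x, I x -> I (a * x) /\ I (x * a))].

Definition is_der (d : B -> B) : Prop :=
  (forall x y, d (x + y) = d x + d y) /\
  (forall x y, d (x * y) = d x * y + x * d y).

Definition is_derA (A : B -> Prop) (d : B -> B) : Prop :=
  is_der d /\ (forall a x, A a -> d (a * x) = a * d x).

Fixpoint all_in (D : (B -> B) -> Prop) (ds : seq (B -> B)) : Prop :=
  if ds is d :: ds' then D d /\ all_in D ds' else True.

Fixpoint In_list (d : B -> B) (l : seq (B -> B)) : Prop :=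
  if l is d' :: l' then d' = d \/ In_list d l' else False.

Definition iter_comp (ds : seq (B -> B)) : B -> B :=
  foldr (fun d f => d \o f) id ds.

(* N_Delta(B)_i = { b | Delta^{i+1} b = 0 } *)
Definition nil_i (D : (B -> B) -> Prop) (i : nat) (b : B) : Prop :=
  forall ds : seq (B -> B), size ds = i.+1 ->
    all_in D ds -> iter_comp ds b = 0.

Definition nil_all (D : (B -> B) -> Prop) (b : B) : Prop :=
  exists i, nil_i D i b.

Definition finite_set_of (D : (B -> B) -> Prop) : Prop :=
  exists l : seq (B -> B), forall d, D d -> In_list d l.

Definition ass (R S : B -> Prop) (r : B) : Prop :=
  R r /\ exists s, S s /\ s * r = 0.

Definition left_denom (R S : B -> Prop) : Prop :=
  [/\ (forall s, S s -> R s), S 1, (forall s t, S s -> S t -> S (s * t)) & ~ S 0] /\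
  (forall r s, R r -> S s -> exists t r', [/\ S t, R r' & t * r = r' * s]) /\
  (forall r s, R r -> S s -> r * s = 0 -> exists t, S t /\ t * r = 0).
End Defs.

(* [left_frac R S X f]: the (ring morphism) f : B -> Q, restricted to R,
   identifies X with the left localization S^{-1}R:
   f(R) in X, f(s) invertible in Q, every x in X is f(s)^{-1} f(r),
   and ker f on R is exactly ass_R(S).  This is the standard characterization
   of the left ring (module) of fractions S^{-1}R up to isomorphism. *)
Definition left_frac (B Q : pzRingType) (R S : B -> Prop) (X : Q -> Prop)
  (f : B -> Q) : Prop :=
  [/\ (forall r, R r -> X (f r)),
      (forall s, S s -> exists u, u * f s = 1 /\ f s * u = 1),
      (forall x, X x -> exists s r, [/\ S s, R r & f s * x = f r]) &
      (forall r, R r -> (f r = 0 <-> ass R S r))].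

(* [ext] extends each derivation d in D to S^{-1}B (via f) by
   d(s^{-1} e) = s^{-1} d(e) *)
Definition ext_spec (B Q : pzRingType) (f : B -> Q) (S : B -> Prop)
  (D : (B -> B) -> Prop) (ext : (B -> B) -> Q -> Q) : Prop :=
  forall d, D d -> forall s e q, S s -> f s * q = f e -> f s * ext d q = f (d e).

Definition ext_set (B Q : pzRingType) (D : (B -> B) -> Prop)
  (ext : (B -> B) -> Q -> Q) : (Q -> Q) -> Prop :=
  fun g => exists d, D d /\ g = ext d.

Definition is_subalg (K : fieldType) (E : algType K) (A : E -> Prop) : Prop :=
  [/\ A 1, (forall x y, A x -> A y -> A (x - y)),
      (forall x y, A x -> A y -> A (x * y)) &
      (forall (k : K) x, A x -> A (k *: x))].

(* Main.v *)
Require Import Defs.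
From HB Require Import structures.
From mathcomp Require Import all_boot all_order all_algebra.
From Stdlib Require Import FunctionalExtensionality Classical.
Set Implicit Arguments. Unset Strict Implicit. Unset Printing Implicit Defensive.
Import GRing.Theory.
Local Open Scope ring_scope.

Section Gen.
Variable B : pzRingType.
Implicit Types (D : (B -> B) -> Prop) (S : B -> Prop) (d : B -> B) (ds : seq (B -> B)) (x y t : B).

Lemma der_sub d : is_der d -> forall x y, d (x - y) = d x - d y.
Proof. by case=> Hadd _ x y; rewrite -[in d x](subrK y x) (Hadd (x - y) y) addrK. Qed.

Lemma iter_cons d ds x : iter_comp (d :: ds) x = d (iter_comp ds x).
Proof. by []. Qed.

Lemma iter_nil x : iter_comp [::] x = x.
Proof. by []. Qed.

Lemma der_kill_l D t : (forall d, D d -> is_der d) -> (forall d, D d -> d t = 0) ->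
  forall ds, all_in D ds -> forall x, iter_comp ds (t * x) = t * iter_comp ds x.
Proof.
move=> HD Ht; elim=> [|d ds IH] //= [Dd Hds] x.
by rewrite ?iter_cons IH //; case: (HD d Dd) => _ ->; rewrite (Ht d Dd) mul0r add0r.
Qed.

Lemma der_kill_r D t : (forall d, D d -> is_der d) -> (forall d, D d -> d t = 0) ->
  forall ds, all_in D ds -> forall x, iter_comp ds (x * t) = iter_comp ds x * t.
Proof.
move=> HD Ht; elim=> [|d ds IH] //= [Dd Hds] x.
by rewrite ?iter_cons IH //; case: (HD d Dd) => _ ->; rewrite (Ht d Dd) mulr0 addr0.
Qed.

Lemma nil0P D t : nil_i D 0 t -> forall d, D d -> d t = 0.
Proof. by move=> H d Dd; exact: (H [:: d] erefl (conj Dd I)). Qed.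

Lemma all_in_mono D1 D2 : (forall g, D1 g -> D2 g) -> forall ds, all_in D1 ds -> all_in D2 ds.
Proof. by move=> H; elim=> [|d ds IH] //= [? ?]; split; auto. Qed.

Lemma nil_i_eqv D1 D2 : (forall g, D1 g <-> D2 g) -> forall i x, nil_i D1 i x <-> nil_i D2 i x.
Proof.
move=> H i x; split=> Hn ds Hs Ha; apply: Hn => //; apply: all_in_mono Ha => g; by case: (H g).
Qed.

Lemma in_flat (l : seq (B -> B)) d (xs : seq B) y : In_list d l -> y \in xs ->
  d y \in flatten (map (fun g => map g xs) l).
Proof.
elim: l => //= g l IH [<-|H] Hy; rewrite mem_cat ?map_f //.
by rewrite IH ?orbT.
Qed.

Lemma fin_vals D : finite_set_of D -> forall x n, exists xs : seq B,
  forall ds, all_in D ds -> size ds = n -> iter_comp ds x \in xs.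
Proof.
case=> l Hl x; elim=> [|n [xs IH]].
  by exists [:: x]; case=> //= _ _; rewrite mem_seq1.
exists (flatten (map (fun g => map g xs) l)); case=> //= d ds [Dd Hds] [Hs].
rewrite ?iter_cons; apply: in_flat; [exact: Hl | exact: IH].
Qed.

Lemma common_ann S (P : B -> Prop) : left_denom (fun _ => True) S -> forall xs : seq B,
  (forall y, y \in xs -> P y -> exists s, S s /\ s * y = 0) ->
  exists t, S t /\ forall y, y \in xs -> P y -> t * y = 0.
Proof.
move=> [[_ S1 SM _] [Ore _]]; elim=> [|x xs IH] H.
  by exists 1; split=> // y; rewrite in_nil.
have [t [St Ht]] : exists t, S t /\ forall y, y \in xs -> P y -> t * y = 0.
  by apply: IH => y Hy; apply: H; rewrite in_cons Hy orbT.
case: (classic (P x)) => [Px|nPx]; last first.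
  exists t; split=> // y; rewrite in_cons => /orP [/eqP -> /nPx [] | Hy Py].
  exact: Ht.
have [s [Ss Hsx]] := H x (mem_head x xs) Px.
have [u [r [Su _ Hur]]] := Ore t s I Ss.
exists (u * t); split; first exact: SM.
move=> y; rewrite in_cons => /orP [/eqP -> _ | Hy Py].
  by rewrite Hur -mulrA Hsx mulr0.
by rewrite -mulrA Ht // mulr0.
Qed.

Lemma word_ann S D : left_denom (fun _ => True) S -> finite_set_of D -> forall x n,
  (forall ds, all_in D ds -> size ds = n -> exists s, S s /\ s * iter_comp ds x = 0) ->
  exists t, S t /\ forall ds, all_in D ds -> size ds = n -> t * iter_comp ds x = 0.
Proof.
move=> HS Hf x n H; have [xs Hxs] := fin_vals Hf x n.
have [t [St Ht]] : exists t, S t /\ forall y, y \in xs ->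
    (exists ds, [/\ all_in D ds, size ds = n & y = iter_comp ds x]) -> t * y = 0.
  apply: (common_ann HS) => y _ [ds [Hds Hsz ->]]; exact: H.
exists t; split=> // ds Hds Hsz; apply: Ht; [exact: Hxs | by exists ds].
Qed.

Lemma der0 d : is_der d -> d 0 = 0.
Proof. by move=> Hd; have := der_sub Hd 0 0; rewrite !subrr. Qed.

End Gen.

Section Ext.
Variables (B Q : pzRingType) (S : B -> Prop) (D : (B->B)->Prop) (ext : (B->B) -> Q -> Q).

Lemma ext_set_map ds : all_in (ext_set D ext) ds -> exists ds', all_in D ds' /\ ds = map ext ds'.
Proof.
elim: ds => [|g ds IH] /=; first by exists [::].
case=> [[d [Dd ->]] /IH [ds' [H1 ->]]]; by exists (d :: ds').
Qed.

Lemma all_in_map ds' : all_in D ds' -> all_in (ext_set D ext) (map ext ds').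
Proof. elim: ds' => [|d ds IH] //= [Dd H]; split; [by exists d | exact: IH]. Qed.

Lemma ext_iter (f : B -> Q) : ext_spec f S D ext -> forall s e q, S s -> f s * q = f e ->
  forall ds, all_in D ds -> f s * iter_comp (map ext ds) q = f (iter_comp ds e).
Proof.
move=> He s e q Ss Hq; elim=> [|d ds IH] //= [Dd Hds].
by rewrite ?iter_cons; apply: He => //; exact: IH.
Qed.

Lemma nil_ext_kill (f : B -> Q) i s e q : ext_spec f S D ext -> S s -> f s * q = f e ->
  nil_i (ext_set D ext) i q -> forall ds, all_in D ds -> size ds = i.+1 ->
  f (iter_comp ds e) = 0.
Proof.
move=> He Ss Hq Hn ds Hds Hsz.
by rewrite -(ext_iter He Ss Hq Hds) Hn ?size_map ?mulr0 //; exact: all_in_map.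
Qed.

Lemma nil_ext_map (f : {rmorphism B -> Q}) i r : S 1 -> ext_spec f S D ext ->
  nil_i D i r -> nil_i (ext_set D ext) i (f r).
Proof.
move=> S1 He Hr ds Hsz /ext_set_map [ds' [Hds' Eds]]; subst ds.
have := ext_iter He S1 (q := f r) (e := r) _ Hds'.
rewrite rmorph1 !mul1r => -> //; rewrite Hr ?rmorph0 //; by rewrite size_map in Hsz.
Qed.

Lemma ass_frac (f : B -> Q) (R : B -> Prop) r : left_frac (fun _ => True) S (fun _ => True) f ->
  R r -> (f r = 0 <-> ass R S r).
Proof.
case=> _ _ _ H4 Rr; have [Ha Hb] := H4 r I; split.
  by move=> /Ha [_ ?]; split.
by case=> _ ?; apply: Hb; split.
Qed.

Lemma LF_i (f : {rmorphism B -> Q}) i : left_frac (fun _ => True) S (fun _ => True) f -> S 1 ->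
  ext_spec f S D ext ->
  (forall x, nil_i (ext_set D ext) i x -> exists s r, [/\ S s, nil_i D i r & f s * x = f r]) ->
  left_frac (nil_i D i) S (nil_i (ext_set D ext) i) f.
Proof.
move=> Hf S1 He H3; split => //.
- by move=> r; exact: nil_ext_map.
- by case: Hf.
- by move=> r Rr; exact: ass_frac.
Qed.

End Ext.

Lemma LF_all (B Q : pzRingType) (S : B -> Prop) (D : (B->B)->Prop) DE (f : B -> Q) :
  left_frac (fun _ => True) S (fun _ => True) f ->
  (forall i, left_frac (nil_i D i) S (nil_i DE i) f) ->
  left_frac (nil_all D) S (nil_all DE) f.
Proof.
move=> Hf H; split.
- by move=> r [i Hr]; case: (H i) => H1 _ _ _; exists i; exact: H1.
- by case: Hf.
- move=> x [i Hx]; case: (H i) => _ _ H3 _; have [s [r [Ss Hr E]]] := H3 x Hx.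
  by exists s, r; split=> //; exists i.
- by move=> r Rr; exact: ass_frac.
Qed.

Section Rho.
Variables (E Ebar Q : pzRingType) (pi : {rmorphism E -> Ebar}) (sigma : {rmorphism E -> Q}).
Hypothesis surj : forall x, exists e, pi e == x.
Hypothesis ker : forall e, pi e = 0 -> sigma e = 0.

Definition rho_fun (x : Ebar) : Q := sigma (xchoose (surj x)).

Lemma rhoE e : rho_fun (pi e) = sigma e.
Proof.
rewrite /rho_fun; set c := xchoose _.
have Hc : pi c = pi e by apply/eqP; exact: (xchooseP (surj (pi e))).
apply/eqP; rewrite -subr_eq0 -rmorphB; apply/eqP/ker.
by rewrite rmorphB Hc subrr.
Qed.

Lemma rho_surj x : exists e, x = pi e.
Proof. by have [e /eqP <-] := surj x; exists e. Qed.

Lemma rho_zmod : zmod_morphism rho_fun.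
Proof.
move=> x y; have [a ->] := rho_surj x; have [b ->] := rho_surj y.
by rewrite -rmorphB !rhoE rmorphB.
Qed.

Lemma rho_mon : monoid_morphism rho_fun.
Proof.
split; first by rewrite -(rmorph1 pi) rhoE rmorph1.
move=> x y; have [a ->] := rho_surj x; have [b ->] := rho_surj y.
by rewrite -rmorphM !rhoE rmorphM.
Qed.

HB.instance Definition _ := GRing.isZmodMorphism.Build Ebar Q rho_fun rho_zmod.
HB.instance Definition _ := GRing.isMonoidMorphism.Build Ebar Q rho_fun rho_mon.

Definition rho : {rmorphism Ebar -> Q} := rho_fun.
End Rho.
Theorem proposition2p6 (K : fieldType) (E : algType K) (A : E -> Prop)
  (Delta : (E -> E) -> Prop) (I : E -> Prop) (S : E -> Prop)
  (Q : pzRingType) (sigma : {rmorphism E -> Q})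
  (Ebar : pzRingType) (pi : {rmorphism E -> Ebar}) :
  is_subalg A ->
  (forall d, Delta d -> is_derA A d) ->
  is_ideal I ->
  left_denom (fun _ => True) S ->
  (forall e, ass (fun _ => True) S e <-> I e) ->
  (forall s, S s -> nil_i Delta 0 s) ->
  (* Q = S^{-1}E with canonical map sigma *)
  left_frac (fun _ => True) S (fun _ => True) sigma ->
  (* Ebar = E/I with canonical projection pi *)
  (forall x : Ebar, exists e, pi e = x) ->
  (forall e, pi e = 0 <-> I e) ->
  [/\
   (* (1) *)
   (forall d, Delta d -> forall e, I e -> I (d e)) /\
   (forall d, Delta d -> exists db : Ebar -> Ebar,
       (forall e, db (pi e) = pi (d e)) /\
       is_derA (fun x => exists a, A a /\ x = pi a) db),
   (* (2) *)
   finite_set_of Delta ->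
     left_denom (nil_all Delta) S /\
     (forall n, ass (nil_all Delta) S n <-> nil_all Delta n /\ I n),
   (* (3) *)
   finite_set_of Delta -> forall ext, ext_spec sigma S Delta ext ->
     left_frac (nil_all Delta) S (nil_all (ext_set Delta ext)) sigma,
   (* (4) *)
   finite_set_of Delta -> forall ext, ext_spec sigma S Delta ext ->
     forall i, left_frac (nil_i Delta i) S (nil_i (ext_set Delta ext) i) sigma
  &
   (* (5) *)
   forall dbar : (E -> E) -> Ebar -> Ebar,
     (forall d, Delta d -> forall e, dbar d (pi e) = pi (d e)) ->
     let Dbar := fun g => exists d, Delta d /\ g = dbar d in
     let Sbar := fun x => exists s, S s /\ x = pi s in
     exists rho : {rmorphism Ebar -> Q},
       [/\ (forall e, rho (pi e) = sigma e),
           left_denom (fun _ => True) Sbar,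
           left_frac (fun _ => True) Sbar (fun _ => True) rho &
           forall ext ext', ext_spec sigma S Delta ext ->
             ext_spec rho Sbar Dbar ext' ->
             [/\ left_frac (nil_all Dbar) Sbar (nil_all (ext_set Dbar ext')) rho,
                 (forall q, nil_all (ext_set Dbar ext') q <->
                            nil_all (ext_set Delta ext) q),
                 (forall i, left_frac (nil_i Dbar i) Sbar
                                      (nil_i (ext_set Dbar ext') i) rho) &
                 (forall i q, nil_i (ext_set Dbar ext') i q <->
                              nil_i (ext_set Delta ext) i q)]]].
Proof.
move=> HA HD HI HS HassI HS0 Hsig Hsurj Hker.
have HDd : forall d, Delta d -> is_der d by move=> d /HD [].
have Skill : forall s, S s -> forall d, Delta d -> d s = 0.
  by move=> s Ss; apply: nil0P (HS0 s Ss).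
have HS' := HS; case: HS' => [[_ S1 SM S0] [Ore Den]].
have Hsig' := Hsig; case: Hsig' => _ Hs2 Hs3 Hs4.
have Istab : forall d, Delta d -> forall e, I e -> I (d e).
  move=> d Dd e /HassI [_ [s [Ss Hse]]]; apply/HassI; split=> //; exists s; split=> //.
  have := (HDd d Dd).2 s e; rewrite Hse (Skill s Ss d Dd) mul0r add0r der0 //; exact: HDd.
have psurj : forall x, exists e, x = pi e by move=> x; have [e <-] := Hsurj x; exists e.
have surjb : forall x, exists e, pi e == x by move=> x; have [e <-] := Hsurj x; exists e.
have kerS : forall e, pi e = 0 -> sigma e = 0.
  by move=> e /Hker /HassI Ha; apply/(Hs4 e Logic.I).
have Hwords : forall x n, (forall ds, all_in Delta ds -> size ds = n -> I (iter_comp ds x)) ->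
   finite_set_of Delta ->
   exists t, S t /\ forall ds, all_in Delta ds -> size ds = n -> t * iter_comp ds x = 0.
  move=> x n H Hf; apply: (word_ann HS Hf) => ds Hds Hsz.
  by have [_ [s [Ss ?]]] := (HassI _).2 (H ds Hds Hsz); exists s.
have H34 : finite_set_of Delta -> forall ext, ext_spec sigma S Delta ext ->
    forall i x, nil_i (ext_set Delta ext) i x ->
    exists s r, [/\ S s, nil_i Delta i r & sigma s * x = sigma r].
  move=> Hf ext Hext i x Hx.
  have [s [e [Ss _ Hq]]] := Hs3 x Logic.I.
  have [u [Su Hu]] : exists u, S u /\ forall ds, all_in Delta ds -> size ds = i.+1 ->
      u * iter_comp ds e = 0.
    apply: Hwords => // ds Hds Hsz; apply/HassI/(Hs4 _ Logic.I).
    exact: (nil_ext_kill Hext Ss Hq Hx Hds Hsz).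
  exists (u * s), (u * e); split; first exact: SM.
    move=> ds Hsz Hds; rewrite (der_kill_l HDd (Skill u Su)) //; exact: Hu.
  by rewrite !rmorphM -mulrA Hq.
split.
- split; first exact: Istab.
  move=> d Dd.
  pose pinv x := xchoose (surjb x).
  have Hpinv : forall x, pi (pinv x) = x by move=> x; apply/eqP; exact: (xchooseP (surjb x)).
  have dbE : forall e, pi (d (pinv (pi e))) = pi (d e).
    move=> e; apply/eqP; rewrite -subr_eq0 -rmorphB -der_sub; last exact: HDd.
    apply/eqP/Hker/Istab => //; apply/Hker; by rewrite rmorphB Hpinv subrr.
  exists (fun x => pi (d (pinv x))); split => //.
  split; [split|].
  + move=> x y; have [a ->] := psurj x; have [b ->] := psurj y.
    by rewrite -rmorphD !dbE (HDd d Dd).1 rmorphD.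
  + move=> x y; have [a ->] := psurj x; have [b ->] := psurj y.
    by rewrite -rmorphM !dbE (HDd d Dd).2 rmorphD !rmorphM.
  + move=> _ x [a [Aa ->]]; have [b ->] := psurj x.
    by rewrite -rmorphM !dbE (HD d Dd).2 // rmorphM.
- move=> Hf; split.
  + split; [split|split].
    * by move=> s Ss; exists 0%N; exact: HS0.
    * exact: S1.
    * exact: SM.
    * exact: S0.
    * move=> r s [i Hr] Ss; have [t [r' [St _ Htr]]] := Ore r s Logic.I Ss.
      have [u [Su Hu]] : exists u, S u /\ forall ds, all_in Delta ds -> size ds = i.+1 ->
          u * iter_comp ds r' = 0.
        apply: Hwords => // ds Hds Hsz; apply/HassI.
        have H0 : iter_comp ds r' * s = 0.
          rewrite -(der_kill_r HDd (Skill s Ss)) // -Htr (der_kill_l HDd (Skill t St)) //.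
          by rewrite Hr // mulr0.
        by have [t' [St' Ht']] := Den _ _ Logic.I Ss H0; split=> //; exists t'.
      exists (u * t), (u * r'); split; first exact: SM.
        exists i => ds Hsz Hds; rewrite (der_kill_l HDd (Skill u Su)) //; exact: Hu.
      by rewrite -!mulrA Htr.
    * by move=> r s _ Ss Hrs; exact: (Den r s Logic.I Ss Hrs).
  + move=> n; split.
      by case=> Hn [s [Ss Hsn]]; split=> //; apply/HassI; split=> //; exists s.
    by case=> Hn /HassI [_ Hx]; split.
- move=> Hf ext Hext; apply: (LF_all Hsig) => i.
  apply: (LF_i Hsig S1 Hext); exact: H34.
- move=> Hf ext Hext i; apply: (LF_i Hsig S1 Hext); exact: H34.
move=> dbar Hdbar Dbar Sbar.
pose rh := @rho _ _ _ pi sigma surjb kerS.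
have rhE : forall e, rh (pi e) = sigma e := @rhoE _ _ _ pi sigma surjb kerS.
have S1b : Sbar 1 by exists 1; rewrite rmorph1.
have HSb : left_denom (fun _ => True) Sbar.
  split; [split|split].
  - by [].
  - exact: S1b.
  - by move=> _ _ [s [Ss ->]] [t [St ->]]; exists (s * t); rewrite rmorphM; split=> //; exact: SM.
  - case=> s [Ss Hs]; have /HassI [_ [t [St Hts]]] : I s by apply/Hker.
    by apply: S0; rewrite -Hts; exact: SM.
  - move=> x _ _ [s [Ss ->]]; have [e ->] := psurj x.
    have [t [r' [St _ H]]] := Ore e s Logic.I Ss.
    exists (pi t), (pi r'); split=> //; [by exists t | by rewrite -!rmorphM H].
  - move=> x _ _ [s [Ss ->]]; have [e ->] := psurj x => Hxs.
    have /HassI [_ [u [Su Hu]]] : I (e * s) by apply/Hker; rewrite rmorphM.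
    have H0 : u * e * s = 0 by rewrite -mulrA.
    have [t [St Ht]] := Den (u * e) s Logic.I Ss H0.
    exists (pi (t * u)); split; first by exists (t * u); split=> //; exact: SM.
    by rewrite -rmorphM -mulrA Ht rmorph0.
have Hrho : left_frac (fun _ => True) Sbar (fun _ => True) rh.
  split.
  - by [].
  - by move=> _ [s [Ss ->]]; rewrite rhE; exact: Hs2.
  - move=> x _; have [s [e [Ss _ H]]] := Hs3 x Logic.I.
    by exists (pi s), (pi e); split=> //; [exists s | rewrite !rhE].
  - move=> r _; have [e ->] := psurj r; rewrite rhE; split.
      move=> /(Hs4 e Logic.I).1 [_ [s [Ss H]]]; split=> //; exists (pi s); split; first by exists s.
      by rewrite -rmorphM H rmorph0.
    case=> _ [_ [[s [Ss ->]] H]].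
    have /HassI [_ [u [Su Hu]]] : I (s * e) by apply/Hker; rewrite rmorphM.
    apply/(Hs4 e Logic.I).2; split=> //; exists (u * s); split; [exact: SM | by rewrite -mulrA].
exists rh; split=> //.
move=> ext ext' Hext Hext'.
have Hiter : forall dsb, all_in Dbar dsb -> forall e, exists ds,
    [/\ all_in Delta ds, size ds = size dsb & iter_comp dsb (pi e) = pi (iter_comp ds e)].
  elim=> [|g dsb IH] /= => [_ e|[[d [Dd ->]] Hdsb] e]; first by exists [::].
  have [ds [Hds Hsz He]] := IH Hdsb e.
  exists (d :: ds); split=> //=; first by rewrite Hsz.
  by rewrite ?iter_cons He Hdbar.
have H5 : forall i x, nil_i (ext_set Dbar ext') i x ->
    exists s r, [/\ Sbar s, nil_i Dbar i r & rh s * x = rh r].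
  move=> i x Hx; have [s [e [Ss _ Hq]]] := Hs3 x Logic.I.
  have Hq' : rh (pi s) * x = rh (pi e) by rewrite !rhE.
  have Ssb : Sbar (pi s) by exists s.
  exists (pi s), (pi e); split=> //.
  move=> dsb Hsz Hdsb.
  have := nil_ext_kill Hext' Ssb Hq' Hx Hdsb Hsz.
  have [ds [Hds Hsz' ->]] := Hiter dsb Hdsb e.
  by rewrite rhE => /(Hs4 _ Logic.I).1 /HassI /Hker.
have LFi : forall i, left_frac (nil_i Dbar i) Sbar (nil_i (ext_set Dbar ext') i) rh.
  by move=> i; apply: (LF_i Hrho S1b Hext'); exact: H5.
have Hee : forall d, Delta d -> ext' (dbar d) = ext d.
  move=> d Dd; apply: functional_extensionality => q.
  have [s [e [Ss _ Hq]]] := Hs3 q Logic.I.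
  have [u [Hu _]] := Hs2 s Ss.
  have h1 := Hext d Dd s e q Ss Hq.
  have Hq2 : rh (pi s) * q = rh (pi e) by rewrite !rhE.
  have h2 := Hext' (dbar d) (ex_intro _ d (conj Dd erefl)) (pi s) (pi e) q
     (ex_intro _ s (conj Ss erefl)) Hq2.
  rewrite Hdbar // !rhE in h2.
  by rewrite -[ext' _ q]mul1r -Hu -mulrA h2 -h1 mulrA Hu mul1r.
have Hset : forall g, ext_set Dbar ext' g <-> ext_set Delta ext g.
  move=> g; split.
    by case=> h [[d [Dd ->]] ->]; exists d; split=> //; rewrite Hee.
  case=> d [Dd ->]; exists (dbar d); split; first by exists d.
  by rewrite Hee.
split=> //.
- exact: (LF_all Hrho LFi).
- move=> q; split; case=> i H; exists i.
    exact: (nil_i_eqv Hset i q).1 H.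
  exact: (nil_i_eqv Hset i q).2 H.
- by move=> i q; exact: nil_i_eqv.
Qed.
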